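(* Let $b\ge 0$ and $h\ge 2b+1$ be integers, let $H$ be a set of $h$ vertices, and fix $\beta>0$. Let $M^1$ and $M^2$ be any two transition matrices (as defined in the context). Then the product $M^1M^2$ has a column containing at least $b+1$ strictly positive entries.
   Context: A reduced graph on $H$ is a directed graph obtained from the complete directed graph (without self-loops) on $H$ by deleting, for each vertex, an arbitrary set of $b$ of its incoming edges. A transition matrix is an $h\times h$ row-stochastic matrix $M$ with nonnegative real entries, rows and columns indexed by $H$, for which there is a reduced graph $R$ on $H$ such that $M_{ij}\ge\beta$ whenever $j=i$ or $(j,i)$ is an edge of $R$. (This models one phase of $D$ iterations of the Relay-IABC protocol: honest node $i$'s new state is a weighted combination, with weights at least $\beta$, of its own state and the states of its in-neighbors in the reduced graph remaining after trimming.) *)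

(* Defs.v *)
From HB Require Import structures.
From mathcomp Require Import all_boot all_order all_algebra.
Set Implicit Arguments. Unset Strict Implicit. Unset Printing Implicit Defensive.
Import Order.TTheory GRing.Theory Num.Theory.
Local Open Scope ring_scope.

(* Vertex set H is modelled by 'I_h.  A directed graph on H is a relation
   E : rel 'I_h, where E j i means that (j,i) is an edge (from j to i). *)

(* A reduced graph: obtained from the complete directed graph without
   self-loops by deleting, for each vertex i, exactly b of its incoming
   edges. *)
Definition reduced_graph (h b : nat) (E : rel 'I_h) : Prop :=
  (forall i, ~~ E i i) /\
  (forall i : 'I_h, #|[set j : 'I_h | (j != i) && ~~ E j i]| = b).

Definition transition_matrix (R : realFieldType) (h b : nat) (beta : R)
    (M : 'M[R]_h) : Prop :=
  (forall i j, 0 <= M i j) /\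
  (forall i, \sum_j M i j = 1) /\
  exists E : rel 'I_h, reduced_graph b E /\
    (forall i j, (j == i) || E j i -> beta <= M i j).

(* Main.v *)
Require Import Defs.
From HB Require Import structures.
From mathcomp Require Import all_boot all_order all_algebra.
From mathcomp Require Import zify.
Import Order.TTheory GRing.Theory Num.Theory.

Lemma card_set_sum (T : finType) (p : pred T) :
  #|[set x | p x]| = \sum_x (p x : nat).
Proof.
rewrite -sum1_card big_mkcond /=; apply: eq_bigr => x _.
by rewrite inE; case: (p x).
Qed.

Theorem lemma2 (R : realFieldType) (b h : nat) (beta : R)
    (M1 M2 : 'M[R]_h) :
  (2 * b + 1 <= h)%N -> (0 < beta)%R ->
  transition_matrix b beta M1 -> transition_matrix b beta M2 ->
  exists j : 'I_h, b + 1 <= #|[set i : 'I_h | (0 < (M1 *m M2) i j)%R]|.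
Proof.
move=> hh hbeta [M1ge0 [_ [E1 [[E1irr _] E1b]]]] [M2ge0 [_ [E2 [[E2irr E2c] E2b]]]].
have row : forall i, (h - b <= #|[set j | (0 < M2 i j)%R]|)%N.
  move=> i.
  set A := [set j | (j == i) || E2 j i].
  have cA : #|A| = (h - b)%N.
    have := cardsC A; rewrite card_ord.
    have -> : ~: A = [set j | (j != i) && ~~ E2 j i].
      by apply/setP => j; rewrite !inE negb_or.
    rewrite E2c => Hc; apply/eqP; rewrite -(eqn_add2r b) subnK ?Hc //; lia.
  rewrite -cA; apply: subset_leq_card; apply/subsetP => j.
  rewrite !inE => Hj; exact: (lt_le_trans hbeta (E2b i j Hj)).
have [/existsP [j Hj]|Hn] := boolP [exists j, (b + 1 <= #|[set i | (0 < M2 i j)%R]|)%N].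
  exists j; apply: (leq_trans Hj); apply: subset_leq_card; apply/subsetP => i.
  rewrite !inE => Hij.
  rewrite mxE (bigD1 i) //=.
  apply: (@lt_le_trans _ _ (M1 i i * M2 i j)%R); last rewrite lerDl.
    apply: mulr_gt0 => //; apply: (lt_le_trans hbeta); apply: E1b; by rewrite eqxx.
  by apply: sumr_ge0 => k _; apply: mulr_ge0.
exfalso.
have col : forall j, (#|[set i | (0 < M2 i j)%R]| <= b)%N.
  move=> j; move/existsPn: Hn => /(_ j); rewrite -ltnNge; lia.
have e : (\sum_j #|[set i | (0 < M2 i j)%R]| = \sum_i #|[set j | (0 < M2 i j)%R]|)%N.
  under eq_bigr do rewrite card_set_sum.
  rewrite exchange_big /=; apply: eq_bigr => i _; by rewrite card_set_sum.
have s1 : (\sum_(j : 'I_h) #|[set i | (0 < M2 i j)%R]| <= \sum_(j : 'I_h) b)%N.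
  by apply: leq_sum => j _; apply: col.
have s2 : (\sum_(i : 'I_h) (h - b) <= \sum_(i : 'I_h) #|[set j | (0 < M2 i j)%R]|)%N.
  by apply: leq_sum => i _; apply: row.
rewrite !sum_nat_const !card_ord in s1 s2.
rewrite e in s1.
have := leq_trans s2 s1; rewrite leq_pmul2l; last by lia.
lia.
Qed.
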